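(* For any SETAF $S=(A,X)$ it holds that $\sigma(S) = \sigma(D_S)$ for every $\sigma \in \{\mathrm{adm},\mathrm{com},\mathrm{prf},\mathrm{mod}\}$.
   Context: Let $A$ be a fixed finite set of statements. An interpretation is a mapping $v:A\to\{\mathbf{t},\mathbf{f},\mathbf{u}\}$; it is two-valued if it never assigns $\mathbf{u}$. The information ordering is $\mathbf{u}<_i\mathbf{t}$, $\mathbf{u}<_i\mathbf{f}$ (no other strict pairs), extended pointwise to interpretations. The consensus meet $\sqcap_i$ of truth values gives $\mathbf{t}\sqcap_i\mathbf{t}=\mathbf{t}$, $\mathbf{f}\sqcap_i\mathbf{f}=\mathbf{f}$, and $\mathbf{u}$ otherwise; the consensus of a nonempty set of truth values is their greatest lower bound with respect to $\leq_i$. For an interpretation $v$, $[v]_2$ denotes the set of all two-valued interpretations $w$ with $v\leq_i w$. An ADF is $D=(A,L,C)$ where $L\subseteq A\times A$ and each statement $a$ has an acceptance condition given by a propositional formula $\varphi_a$ over its parents. The operator $\Gamma_D$ maps an interpretation $v$ to the interpretation assigning to each $a$ the consensus (greatest lower bound w.r.t. $\leq_i$) of $\{w(\varphi_a) \mid w\in[v]_2\}$. For an ADF $D$, $v$ is admissible iff $v\leq_i\Gamma_D(v)$; complete iff $\Gamma_D(v)=v$; preferred iff it is $\leq_i$-maximal admissible; a two-valued model iff it is two-valued and $\Gamma_D(v)=v$. These sets are denoted $\mathrm{adm}(D),\mathrm{com}(D),\mathrm{prf}(D),\mathrm{mod}(D)$. A SETAF is a pair $S=(A,X)$ with $X\subseteq(2^A\setminus\{\emptyset\})\times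 A$. For a statement $a$ and interpretation $v$: $a$ is acceptable wrt. $v$ if for all $(B,a)\in X$ there is $a'\in B$ with $v(a')=\mathbf{f}$; $a$ is unacceptable wrt. $v$ if there is $(B,a)\in X$ with $v(a')=\mathbf{t}$ for all $a'\in B$. Then: $v\in\mathrm{adm}(S)$ iff for all $a$, $v(a)=\mathbf{t}$ implies $a$ acceptable and $v(a)=\mathbf{f}$ implies $a$ unacceptable wrt. $v$; $v\in\mathrm{com}(S)$ iff for all $a$, $a$ is acceptable wrt. $v$ iff $v(a)=\mathbf{t}$, and $a$ is unacceptable wrt. $v$ iff $v(a)=\mathbf{f}$; $v\in\mathrm{prf}(S)$ iff $v$ is $\leq_i$-maximal admissible; $v\in\mathrm{mod}(S)$ iff $v\in\mathrm{adm}(S)$ and $v$ assigns $\mathbf{u}$ to no statement. The ADF $D_S$ corresponding to $S$ has acceptance formula $\varphi_a=\bigwedge_{(B,a)\in X}\bigvee_{a'\in B}\neg a'$ for each $a\in A$. *)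

(* Defs.v *)
From mathcomp Require Import all_boot.

Set Implicit Arguments. Unset Strict Implicit. Unset Printing Implicit Defensive.

Inductive tv := Tt | Ff | Uu.

Definition interp (A : finType) := A -> tv.

Definition le_i_tv (x y : tv) : Prop := x = Uu \/ x = y.
Definition le_i (A : finType) (v w : interp A) : Prop := forall a, le_i_tv (v a) (w a).

Definition two_valued (A : finType) (v : interp A) : Prop := forall a, v a <> Uu.

(* A two-valued interpretation is represented as a boolean function
   (true = t, false = f); tv_of_bool is the embedding. *)
Definition tv_of_bool (b : bool) : tv := if b then Tt else Ff.
Definition interp_of_bool (A : finType) (w : {ffun A -> bool}) : interp A :=
  fun a => tv_of_bool (w a).

(* w \in [v]_2 : v <=_i w (boolean test) *)
Definition compatb (A : finType) (v : interp A) (w : {ffun A -> bool}) : bool :=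
  [forall a, match v a with Tt => w a | Ff => ~~ w a | Uu => true end].

Inductive form (A : Type) :=
| FVar of A | FTop | FBot | FNeg of form A
| FAnd of form A & form A | FOr of form A & form A.
Arguments FTop {A}. Arguments FBot {A}.

Fixpoint feval (A : Type) (w : A -> bool) (f : form A) : bool :=
  match f with
  | FVar a => w a
  | FTop => true
  | FBot => false
  | FNeg g => ~~ feval w g
  | FAnd g h => feval w g && feval w h
  | FOr g h => feval w g || feval w h
  end.

Record ADF (A : finType) := mkADF {
  adf_L : rel A;
  adf_phi : A -> form A }.

(* Consensus (glb w.r.t. <=_i) of the nonempty set {w(phi_a) | w in [v]_2}:
   t if all values are t, f if all values are f, u otherwise. *)
Definition Gamma (A : finType) (D : ADF A) (v : interp A) : interp A :=
  fun a =>
    if [forall w : {ffun A -> bool}, compatb v w ==> feval w (adf_phi D a)]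
    then Tt
    else if [forall w : {ffun A -> bool}, compatb v w ==> ~~ feval w (adf_phi D a)]
    then Ff else Uu.

Definition adm_ADF (A : finType) (D : ADF A) (v : interp A) : Prop :=
  le_i v (Gamma D v).
Definition com_ADF (A : finType) (D : ADF A) (v : interp A) : Prop :=
  forall a, Gamma D v a = v a.
Definition prf_ADF (A : finType) (D : ADF A) (v : interp A) : Prop :=
  adm_ADF D v /\ forall v', adm_ADF D v' -> le_i v v' -> le_i v' v.
Definition mod_ADF (A : finType) (D : ADF A) (v : interp A) : Prop :=
  two_valued v /\ forall a, Gamma D v a = v a.

Record SETAF (A : finType) := mkSETAF {
  setaf_X : {set {set A} * A};
  setaf_nonempty : forall B a, (B, a) \in setaf_X -> B != set0 }.

Section SetafSem.
Variables (A : finType) (S : SETAF A).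
Local Notation X := (setaf_X S).

Definition acceptable (v : interp A) (a : A) : Prop :=
  forall B, (B, a) \in X -> exists2 a', a' \in B & v a' = Ff.
Definition unacceptable (v : interp A) (a : A) : Prop :=
  exists2 B, (B, a) \in X & forall a', a' \in B -> v a' = Tt.

Definition adm_S (v : interp A) : Prop :=
  forall a, (v a = Tt -> acceptable v a) /\ (v a = Ff -> unacceptable v a).
Definition com_S (v : interp A) : Prop :=
  forall a, (acceptable v a <-> v a = Tt) /\ (unacceptable v a <-> v a = Ff).
Definition prf_S (v : interp A) : Prop :=
  adm_S v /\ forall v', adm_S v' -> le_i v v' -> le_i v' v.
Definition mod_S (v : interp A) : Prop :=
  adm_S v /\ two_valued v.

(* the ADF D_S: links (b, a) whenever b occurs in some attack (B, a);
   phi_a = /\_{(B,a) in X} \/_{a' in B} ~ a'  (empty conjunction = T) *)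
Definition big_and (fs : seq (form A)) : form A := foldr (@FAnd A) FTop fs.
Definition big_or (fs : seq (form A)) : form A := foldr (@FOr A) FBot fs.

Definition phi_S (a : A) : form A :=
  big_and [seq big_or [seq FNeg (FVar a') | a' <- enum (p.1 : {set A})]
          | p : {set A} * A <- enum X & p.2 == a].

Definition L_S : rel A :=
  fun b a => [exists B : {set A}, ((B, a) \in X) && (b \in B)].

Definition D_of_S : ADF A := mkADF L_S phi_S.
End SetafSem.

(* Main.v *)
Require Import Defs.
From mathcomp Require Import all_boot.

Set Implicit Arguments. Unset Strict Implicit. Unset Printing Implicit Defensive.

Section P.
Variables (A : finType) (S : SETAF A).

Lemma feval_and (w : A -> bool) fs : feval w (big_and fs) = all (feval w) fs.
Proof. by elim: fs => //= f fs ->. Qed.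
Lemma feval_or (w : A -> bool) fs : feval w (big_or fs) = has (feval w) fs.
Proof. by elim: fs => //= f fs ->. Qed.

Lemma feval_phi (w : A -> bool) a :
  feval w (phi_S S a) <->
  (forall B, (B, a) \in setaf_X S -> exists2 a', a' \in B & w a' = false).
Proof.
rewrite /phi_S feval_and all_map all_filter; split.
- move=> /allP H B BX.
  have := H (B, a); rewrite mem_enum BX /= eqxx => /(_ isT).
  rewrite feval_or has_map => /hasP [a'].
  rewrite mem_enum /= => aB Hw; exists a' => //; exact: negbTE.
- move=> H; apply/allP => [[B a0]]; rewrite mem_enum /= => BX.
  apply/implyP => /eqP e; subst a0.
  rewrite feval_or has_map; case: (H B BX) => a' aB wa.
  by apply/hasP; exists a'; rewrite ?mem_enum //= wa.
Qed.

Lemma L1 (v : interp A) a :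
  [forall w : {ffun A -> bool}, compatb v w ==> feval w (phi_S S a)]
  <-> acceptable S v a.
Proof.
split.
- move=> /forallP H B BX.
  pose w := [ffun x => if v x is Ff then false else true].
  have cw : compatb v w by apply/forallP => x; rewrite ffunE; case: (v x).
  have := H w; rewrite cw /= => /feval_phi /(_ B BX) [a' aB].
  rewrite ffunE; case E: (v a') => //; by exists a'.
- move=> H; apply/forallP => w; apply/implyP => /forallP cw.
  apply/feval_phi => B BX; case: (H B BX) => a' aB va; exists a' => //.
  by have := cw a'; rewrite va => /negbTE.
Qed.

Lemma L2 (v : interp A) a :
  [forall w : {ffun A -> bool}, compatb v w ==> ~~ feval w (phi_S S a)]
  <-> unacceptable S v a.
Proof.
split.
- move=> /forallP H.
  pose w := [ffun x => if v x is Tt then true else false].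
  have cw : compatb v w by apply/forallP => x; rewrite ffunE; case: (v x).
  have := H w; rewrite cw /=.
  case: (boolP [exists B : {set A}, ((B, a) \in setaf_X S) &&
                 [forall x in B, if v x is Tt then true else false]]).
    by move=> /existsP [B /andP [BX /forallP HB]] _; exists B => // x xB;
       have := HB x; rewrite xB /=; case: (v x).
  move=> /existsPn N /negP []; apply/feval_phi => B BX.
  have := N B; rewrite BX /= => /forallPn [x]; rewrite negb_imply => /andP [xB nx].
  by exists x; rewrite // ffunE; move: nx; case: (v x).
- move=> [B BX HB]; apply/forallP => w; apply/implyP => /forallP cw.
  apply/negP => /feval_phi /(_ B BX) [a' aB wa].
  by have := cw a'; rewrite HB // wa.
Qed.

Lemma acc_unacc (v : interp A) a : acceptable S v a -> unacceptable S v a -> False.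
Proof. move=> H [B BX HB]; case: (H B BX) => a' aB; by rewrite HB. Qed.

Lemma GammaT (v : interp A) a : Gamma (D_of_S S) v a = Tt <-> acceptable S v a.
Proof.
rewrite /Gamma /=; split.
- by case: ifP => [/L1 //|]; case: ifP.
- by move/L1 => ->.
Qed.

Lemma GammaF (v : interp A) a : Gamma (D_of_S S) v a = Ff <-> unacceptable S v a.
Proof.
rewrite /Gamma /=; split.
- by case: ifP => //; case: ifP => // /L2.
- move=> U; case: ifP => [/L1 H|_]; first by case: (acc_unacc H U).
  by move/L2: U => ->.
Qed.

Lemma adm_eq v : adm_S S v <-> adm_ADF (D_of_S S) v.
Proof.
split.
- move=> H a; case: (H a) => H1 H2; rewrite /le_i_tv.
  case E: (v a); [right|right|by left].
  + by symmetry; apply/GammaT; apply: H1.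
  + by symmetry; apply/GammaF; apply: H2.
- move=> H a; split => E; case: (H a); rewrite E // => G.
  + by apply/GammaT.
  + by apply/GammaF.
Qed.

Lemma com_eq v : com_S S v <-> com_ADF (D_of_S S) v.
Proof.
split.
- move=> H a; case: (H a) => [[a1 a2] [u1 u2]].
  case E: (v a).
  + by apply/GammaT; apply: a2.
  + by apply/GammaF; apply: u2.
  + case G: (Gamma (D_of_S S) v a) => //.
    * by move/GammaT: G => /a1; rewrite E.
    * by move/GammaF: G => /u1; rewrite E.
- move=> H a; have G := H a; split; split.
  + by move/GammaT; rewrite G.
  + by move=> E; apply/GammaT; rewrite G.
  + by move/GammaF; rewrite G.
  + by move=> E; apply/GammaF; rewrite G.
Qed.

End P.

Theorem proposition1 (A : finType) (S : SETAF A) :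
  (forall v : interp A, adm_S S v <-> adm_ADF (D_of_S S) v) /\
  (forall v : interp A, com_S S v <-> com_ADF (D_of_S S) v) /\
  (forall v : interp A, prf_S S v <-> prf_ADF (D_of_S S) v) /\
  (forall v : interp A, mod_S S v <-> mod_ADF (D_of_S S) v).
Proof.
split; first exact: adm_eq.
split; first exact: com_eq.
split.
- move=> v; rewrite /prf_S /prf_ADF; split.
  + move=> [H1 H2]; split; first by apply/adm_eq.
    by move=> v' /adm_eq; apply: H2.
  + move=> [H1 H2]; split; first by apply/adm_eq.
    by move=> v' /adm_eq; apply: H2.
- move=> v; rewrite /mod_S /mod_ADF; split.
  + move=> [/adm_eq H T]; split => // a.
    by case: (H a) => E; [case: (T a)|rewrite -E].
  + move=> [T H]; split => //; apply/adm_eq => a; right; by rewrite H.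
Qed.
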